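(* Let $A_1,\dots,A_m\in\mathrm{Pos}(\mathcal X)$ and $\alpha_1,\dots,\alpha_m\in\mathbb R\cup\{-\infty\}$, and let $\ell:\mathrm{Herm}(\mathcal X)\to\overline{\mathbb R}$ be extended linear with $\ell(\rho)=\sum_{i=1}^m\langle A_i,\rho\rangle\alpha_i$ for all $\rho\in\mathrm{Dens}(\mathcal X)$. Then there exists an extended Hermitian matrix $E=A-\infty B\in\overline{\mathrm{Herm}}(\mathcal X)$ such that $\ell(\rho)=\langle E,\rho\rangle$ for all $\rho\in\mathrm{Dens}(\mathcal X)$.
   Context: $\mathcal X=\mathbb C^n$; $\mathrm{Herm}(\mathcal X)$ Hermitian matrices, $\langle X,Y\rangle=\mathrm{Tr}(X^*Y)$; $\mathrm{Pos}(\mathcal X)$ positive semidefinite; $\mathrm{Dens}(\mathcal X)$ density matrices. $\overline{\mathbb R}=\mathbb R\cup\{\pm\infty\}$ with $0\cdot(-\infty)=0$ and $c\cdot(-\infty)=-\infty$ for $c>0$. An extended linear function $\ell$ satisfies $\ell(\alpha v)=\alpha\ell(v)$ for real $\alpha$ and $\ell(v+v')=\ell(v)+\ell(v')$ whenever $\{\ell(v),\ell(v')\}\ne\{\infty,-\infty\}$. $\overline{\mathrm{Herm}}(\mathcal X)$ is the set of formal expressions $A-\infty B$ with $A\in\mathrm{Herm}(\mathcal X)$, $B\in\mathrm{Pos}(\mathcal X)$, $AB=0$, acting by $\langle A-\infty B,X\rangle=\langle A,X\rangle-\infty\langle B,X\rangle$. *)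

(* Defs.v *)
From mathcomp Require Import all_boot all_order all_algebra.
From mathcomp Require Import complex.
From mathcomp Require Import all_classical all_reals ereal.
Set Implicit Arguments. Unset Strict Implicit. Unset Printing Implicit Defensive.
Import Order.TTheory GRing.Theory Num.Theory.
Local Open Scope ring_scope.

Definition adjmx (R : realType) (p q : nat) (X : 'M[R[i]]_(p, q)) : 'M[R[i]]_(q, p) :=
  (map_mx (@conjc R) X)^T.

Definition herm (R : realType) (n : nat) (X : 'M[R[i]]_n) : Prop := adjmx X = X.

Definition psd (R : realType) (n : nat) (X : 'M[R[i]]_n) : Prop :=
  herm X /\ forall v : 'cV[R[i]]_n, 0 <= (adjmx v *m X *m v) 0 0.

Definition dens (R : realType) (n : nat) (X : 'M[R[i]]_n) : Prop :=
  psd X /\ \tr X = 1.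

(* <X, Y> = Tr(X^* Y); real for Hermitian X, Y, so we take its real part *)
Definition hip (R : realType) (n : nat) (X Y : 'M[R[i]]_n) : R :=
  complex.Re (\tr (adjmx X *m Y)).

(* extended linear function on Herm(X) (l is only constrained on Hermitian arguments) *)
Definition ext_linear (R : realType) (n : nat) (l : 'M[R[i]]_n -> \bar R) : Prop :=
  (forall (a : R) (v : 'M[R[i]]_n), herm v -> l ((a%:C)%C *: v) = (a%:E * l v)%E) /\
  (forall v w : 'M[R[i]]_n, herm v -> herm w ->
     ~ ((l v = +oo%E /\ l w = -oo%E) \/ (l v = -oo%E /\ l w = +oo%E)) ->
     l (v + w) = (l v + l w)%E).

(* pairing of the extended Hermitian matrix A - oo B with X:
   <A,X> - oo <B,X>, with the convention 0 * (-oo) = 0 *)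
Definition ehpair (R : realType) (n : nat) (A B X : 'M[R[i]]_n) : \bar R :=
  ((hip A X)%:E + (-oo) * (hip B X)%:E)%E.

(* Main.v *)
Require Import Defs.
From mathcomp Require Import all_boot all_order all_algebra.
From mathcomp Require Import complex.
From mathcomp Require Import all_classical all_reals ereal.
From mathcomp Require Import spectral sesquilinear.
Import Order.TTheory GRing.Theory Num.Theory.
Local Open Scope ring_scope.
Local Open Scope sesquilinear_scope.
Set Implicit Arguments. Unset Strict Implicit. Unset Printing Implicit Defensive.
Section S.
Variable R : realType.
Local Notation C := (R[i]).

Lemma adjE m p (X : 'M[C]_(m,p)) : adjmx X = X ^t*.
Proof. by rewrite /adjmx map_trmx. Qed.

Lemma adjmxM m p q (A : 'M[C]_(m,p)) (B : 'M[C]_(p,q)) :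
  adjmx (A *m B) = adjmx B *m adjmx A.
Proof. by rewrite !adjE trmx_mul map_mxM. Qed.

Lemma adjmxK m p (A : 'M[C]_(m,p)) : adjmx (adjmx A) = A.
Proof. by rewrite !adjE trmxCK. Qed.

Lemma adjmxD m p (A B : 'M[C]_(m,p)) : adjmx (A + B) = adjmx A + adjmx B.
Proof. by apply/matrixP=> a b; rewrite !mxE rmorphD. Qed.

Lemma adjmx_delta m p (i : 'I_m) (j : 'I_p) :
  adjmx (delta_mx i j : 'M[C]_(m,p)) = delta_mx j i.
Proof. apply/matrixP=> a b; rewrite !mxE. change (Num.conj ((b==i)&&(a==j))%:R = ((a == j) && (b == i))%:R :> C). by rewrite rmorph_nat andbC. Qed.

Lemma tr_adj n (A : 'M[C]_n) : \tr (adjmx A) = (\tr A)^*.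
Proof. by rewrite /mxtrace rmorph_sum; apply: eq_bigr => i _; rewrite !mxE. Qed.

Lemma quad_delta n (P M : 'M[C]_n) j :
  let w := adjmx P *m delta_mx j (0 : 'I_1) in
  (adjmx w *m M *m w) 0 0 = (P *m M *m adjmx P) j j.
Proof.
rewrite /= adjmxM adjmxK adjmx_delta.
rewrite !mulmxA -rowE -mulmxA -colE !mxE; apply: eq_bigr => k _; by rewrite -row_mul !mxE.
Qed.

Lemma psd_spec n (X : 'M[C]_n) : psd X -> exists (P : 'M[C]_n) (d : 'rV[C]_n),
 [/\ P *m adjmx P = 1%:M, adjmx P *m P = 1%:M, X = adjmx P *m diag_mx d *m P
   & forall j, 0 <= d 0 j].
Proof.
move=> [hX hq].
have Xn : X \is normalmx by apply/normalmxP; rewrite -adjE hX.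
move/orthomx_spectralP: Xn.
set P := spectralmx X; set d := spectral_diag X.
have Pu : P \is unitarymx by apply: spectral_unitarymx.
rewrite invmx_unitary // -adjE => XE.
have PP : P *m adjmx P = 1%:M by rewrite adjE; apply/unitarymxP.
have PP' : adjmx P *m P = 1%:M.
  by rewrite adjE -invmx_unitary // mulVmx // spectral_unit.
exists P, d; split => // j.
have := hq (adjmx P *m delta_mx j 0).
rewrite quad_delta XE !mulmxA PP mul1mx -mulmxA PP mulmx1.
by rewrite mxE eqxx mulr1n.
Qed.
Lemma quad_spec n (P : 'M[C]_n) d (v : 'cV[C]_n) :
  (adjmx v *m (adjmx P *m diag_mx d *m P) *m v) 0 0 =
  \sum_j d 0 j * ((P *m v) j 0 * ((P *m v) j 0)^*).
Proof.
rewrite !mulmxA -adjmxM -(mulmxA _ P v) mxE; apply: eq_bigr => j _.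
by rewrite mul_mx_diag !mxE mulrAC mulrC [X in _ * X]mulrC.
Qed.

Lemma psd_null n (X : 'M[C]_n) (v : 'cV[C]_n) : psd X -> (adjmx v *m X *m v) 0 0 = 0 -> X *m v = 0.
Proof.
move=> hX; have [P [d [PP PP' XE dge0]]] := psd_spec hX.
rewrite XE quad_spec => hs.
have H : forall j, d 0 j * ((P *m v) j 0 * ((P *m v) j 0)^*) = 0.
  move=> j; apply: (psumr_eq0P _ hs) => // i _; apply: mulr_ge0 => //; exact: mul_conjC_ge0.
rewrite -!mulmxA.
suff -> : diag_mx d *m (P *m v) = 0 by rewrite mulmx0.
apply/matrixP => a b; rewrite ord1 mul_diag_mx [in LHS]mxE [RHS]mxE.
have /eqP := H a; rewrite mulf_eq0 mul_conjC_eq0 => /orP [] /eqP ->;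
  by rewrite ?mul0r ?mulr0.
Qed.

Lemma tr_spec n (A P : 'M[C]_n) d :
  \tr (A *m (adjmx P *m diag_mx d *m P)) = \sum_j d 0 j * (P *m A *m adjmx P) j j.
Proof.
rewrite !mulmxA mxtrace_mulC !mulmxA /mxtrace; apply: eq_bigr => j _.
by rewrite mul_mx_diag mxE mulrC.
Qed.

Lemma adj_diag n (e : 'rV[C]_n) : (forall j, (e 0 j)^* = e 0 j) ->
  adjmx (diag_mx e) = diag_mx e.
Proof.
move=> he; apply/matrixP => a b; rewrite !mxE eq_sym.
case: eqP => [->|_]; rewrite ?mulr1n ?mulr0n; [exact: he | exact: (@conjC0 C)].
Qed.

Lemma kernel_proj n (B : 'M[C]_n) : psd B -> exists Q : 'M[C]_n,
  [/\ adjmx Q = Q, Q *m B = 0 &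
      forall rho, psd rho -> \tr (B *m rho) = 0 -> rho *m Q = rho].
Proof.
move=> hB; have [P [d [PP PP' BE dge0]]] := psd_spec hB.
pose e : 'rV[C]_n := \row_j (d 0 j == 0)%:R.
exists (adjmx P *m diag_mx e *m P); split.
- rewrite !adjmxM adjmxK adj_diag ?mulmxA // => j.
  rewrite mxE; change (Num.conj ((d 0 j == 0)%:R : C) = (d 0 j == 0)%:R).
  exact: rmorph_nat.
- rewrite BE !mulmxA -(mulmxA _ P) PP mulmx1.
  suff E0 : diag_mx e *m diag_mx d = 0 by rewrite -(mulmxA _ (diag_mx e)) E0 mulmx0 mul0mx.
  apply/matrixP => a b; rewrite mul_mx_diag !mxE.
  case: (a =P b) => [<-|_]; rewrite ?mulr1n ?mulr0n ?mul0r //.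
  by case: (d 0 a =P 0) => [->|_]; rewrite ?mulr0 ?mul0r.
- move=> rho hr; rewrite mxtrace_mulC BE tr_spec => hs.
  have H : forall j, d 0 j * (P *m rho *m adjmx P) j j = 0.
    move=> j; apply: (psumr_eq0P _ hs) => // i _; apply: mulr_ge0 => //.
    by rewrite -quad_delta; case: hr.
  rewrite !mulmxA.
  suff -> : rho *m adjmx P *m diag_mx e = rho *m adjmx P.
    by rewrite -mulmxA PP' mulmx1.
  apply/matrixP => a b; rewrite mul_mx_diag !mxE.
  case: eqP => [_|db]; first by rewrite mulr1.
  have := H b; move/eqP; rewrite mulf_eq0 => /orP [/eqP//|/eqP hq].
  rewrite -quad_delta in hq; have := psd_null hr hq.
  rewrite mulmxA -colE => /matrixP /(_ a 0); rewrite !mxE => ->.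
  by rewrite mul0r.
Qed.
Lemma trpsd_ge0 n (A B : 'M[C]_n) : psd A -> psd B -> 0 <= \tr (A *m B).
Proof.
move=> hA hB; have [P [d [PP PP' BE dge0]]] := psd_spec hB.
rewrite BE tr_spec; apply: sumr_ge0 => j _; apply: mulr_ge0 => //.
by rewrite -quad_delta; case: hA.
Qed.

Lemma ge0C (x : C) : 0 <= x -> x = ((complex.Re x)%:C)%C /\ 0 <= complex.Re x.
Proof. by case: x => a b; rewrite lecE /= => /andP [/eqP -> ->]. Qed.

Lemma adjmx0 m p : adjmx (0 : 'M[C]_(m,p)) = 0.
Proof. by apply/matrixP => a b; rewrite !mxE; exact: (@conjC0 C). Qed.

Lemma psd0 n : psd (0 : 'M[C]_n).
Proof. by split; [exact: adjmx0 | move=> v; rewrite mulmx0 mul0mx mxE]. Qed.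

Lemma psdD n (X Y : 'M[C]_n) : psd X -> psd Y -> psd (X + Y).
Proof.
move=> [hX qX] [hY qY]; split; first by rewrite /herm adjmxD hX hY.
by move=> v; rewrite mulmxDr mulmxDl mxE addr_ge0.
Qed.

Lemma adjmxZ m p (c : R) (X : 'M[C]_(m,p)) : adjmx ((c%:C)%C *: X) = (c%:C)%C *: adjmx X.
Proof.
apply/matrixP => a b; rewrite !mxE.
change (Num.conj ((c%:C)%C * X b a) = (c%:C)%C * Num.conj (X b a)).
rewrite rmorphM; congr (_ * _).
change (conjc (c%:C)%C = (c%:C)%C); by rewrite /= oppr0.
Qed.

Lemma hermZ n (c : R) (X : 'M[C]_n) : herm X -> herm ((c%:C)%C *: X).
Proof. by rewrite /herm adjmxZ => ->. Qed.

Lemma ReD (x y : C) : complex.Re (x + y) = complex.Re x + complex.Re y.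
Proof. by case: x; case: y. Qed.

Lemma ReZ (c : R) (x : C) : complex.Re ((c%:C)%C * x) = c * complex.Re x.
Proof. by case: x => a b /=; rewrite mul0r subr0. Qed.

Lemma hipD n (X Y Z : 'M[C]_n) : hip (X + Y) Z = hip X Z + hip Y Z.
Proof. by rewrite /hip adjmxD mulmxDl mxtraceD ReD. Qed.

Lemma hip0 n (Z : 'M[C]_n) : hip 0 Z = 0.
Proof. by rewrite /hip adjmx0 mul0mx mxtrace0. Qed.

Lemma hipZ n (c : R) (X Z : 'M[C]_n) : hip ((c%:C)%C *: X) Z = c * hip X Z.
Proof. by rewrite /hip adjmxZ -scalemxAl mxtraceZ ReZ. Qed.
End S.

Local Close Scope sesquilinear_scope.

Theorem lemmaA1 (R : realType) (n m : nat)
  (As : 'I_m -> 'M[R[i]]_n) (alpha : 'I_m -> \bar R)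
  (l : 'M[R[i]]_n -> \bar R) :
  (forall i, psd (As i)) ->
  (forall i, alpha i != +oo%E) ->
  ext_linear l ->
  (forall rho : 'M[R[i]]_n, dens rho ->
     l rho = (\sum_(i < m) (hip (As i) rho)%:E * alpha i)%E) ->
  exists A B : 'M[R[i]]_n,
    [/\ herm A, psd B, A *m B = 0 &
        forall rho : 'M[R[i]]_n, dens rho -> l rho = ehpair A B rho].
Proof.
move=> hA hal _ hl.
pose A0 := \sum_i ((fine (alpha i))%:C)%C *: As i.
pose B0 := \sum_(i | alpha i == -oo%E) As i.
have hB0 : psd B0.
  apply: (big_ind (@psd R n)) => [|x y|i _]; [exact: psd0|exact: psdD|exact: hA].
have hA0 : herm A0.
  apply: (big_ind (@herm R n)) => [|x y hx hy|i _]; first exact: adjmx0.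
    by rewrite /herm adjmxD hx hy.
  exact/hermZ/(hA i).1.
have [Q [hQ QB hQr]] := kernel_proj hB0.
exists (Q *m A0 *m Q), B0; split => //.
- by rewrite /herm !adjmxM hQ hA0 mulmxA.
- by rewrite -mulmxA QB mulmx0.
move=> rho hr; rewrite hl //.
have hrp := hr.1.
pose h i := hip (As i) rho.
have hipE : forall X, herm X -> hip X rho = complex.Re (\tr (X *m rho)).
  by move=> X hX; rewrite /hip hX.
have trE : forall i, \tr (As i *m rho) = ((h i)%:C)%C /\ 0 <= h i.
  move=> k; rewrite /h (hipE _ (hA k).1); exact: (ge0C (trpsd_ge0 (hA k) hrp)).
have hB0E : hip B0 rho = \sum_(i | alpha i == -oo%E) h i.
  exact: (big_morph (fun X => hip X rho) (fun X Y => @hipD R n X Y rho) (hip0 rho)).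
have hA0E : hip A0 rho = \sum_i fine (alpha i) * h i.
  rewrite (big_morph (fun X => hip X rho) (fun X Y => @hipD R n X Y rho) (hip0 rho)).
  by apply: eq_bigr => k _; rewrite hipZ.
rewrite /ehpair hB0E.
have sge0 : 0 <= \sum_(i | alpha i == -oo%E) h i.
  by apply: sumr_ge0 => i _; exact: (trE i).2.
move: sge0; rewrite le_eqVlt => /orP [/eqP sB0|sBpos].
- have hz : forall i, alpha i == -oo%E -> h i = 0.
    apply: (psumr_eq0P _ (esym sB0)) => i _; exact: (trE i).2.
  have trB : \tr (B0 *m rho) = 0.
    rewrite mulmx_suml (big_morph _ (@mxtraceD _ _) (mxtrace0 _ _)).
    by apply: big1 => i hi; rewrite (trE i).1 hz.
  have rQ := hQr rho hrp trB.
  have Qr : Q *m rho = rho.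
    by rewrite -{1}hQ -{1}(hrp.1) -adjmxM rQ hrp.1.
  have hipA : hip (Q *m A0 *m Q) rho = hip A0 rho.
    rewrite !hipE //; last by rewrite /herm !adjmxM hQ hA0 mulmxA.
    by rewrite -mulmxA Qr -mulmxA mxtrace_mulC -mulmxA rQ.
  rewrite -sB0 mule0 adde0 hipA hA0E -sumEFin; apply: eq_bigr => i _.
  have := hal i; have := hz i.
  case: (alpha i) => [r| |] //= hzi _.
    by rewrite -EFinM mulrC.
  by rewrite -/(h i) hzi // mul0r mul0e.
- case/boolP: [exists j, (alpha j == -oo%E) && (0 < h j)] => [/existsP [j /andP [hj hp]]|/existsPn H].
    rewrite (@gt0_mulNye _ (\sum_(i | alpha i == -oo%E) h i)%:E); last by rewrite lte_fin.
    rewrite addeNy.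
    apply/esum_eqNyP; exists j; split => //.
    by rewrite -/(h j) (eqP hj) gt0_muleNy ?lte_fin.
  exfalso; move: sBpos; rewrite big1 ?ltxx // => i hi.
  have := H i; rewrite hi /= => hn; apply/eqP; rewrite eq_le (trE i).2 andbT.
  by rewrite leNgt.
Qed.
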